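(* Let $V$ and $V'$ be left vector spaces over fields $K$ and $K'$ respectively (arbitrary, possibly infinite, dimensions), with $\mathcal G\neq\emptyset$ and $\mathcal G'\neq\emptyset$. If $\phi:\mathcal G\to\mathcal G'$ is an isomorphism of distant graphs (a bijection such that for all $X,Y\in\mathcal G$: $X\oplus Y=V$ if and only if $X^\phi\oplus Y^\phi=V'$), then $\phi$ is also an isomorphism of Grassmann graphs (for all $X,Y\in\mathcal G$: $X\sim Y$ if and only if $X^\phi\sim Y^\phi$).
   Context: Fields are not necessarily commutative (division rings). For a left vector space $V$ over $K$, $\mathcal G$ denotes the set of all subspaces $X\le V$ such that $X$ is isomorphic to $V/X$; $\mathcal G'$ is defined likewise for $V'$. Two elements $X,Y\in\mathcal G$ are distant if $X\oplus Y=V$. They are adjacent ($X\sim Y$) if $\dim((X+Y)/X)=\dim((X+Y)/Y)=1$. The distant graph on $\mathcal G$ has vertex set $\mathcal G$ and edges the unordered pairs of distant elements; the Grassmann graph on $\mathcal G$ has vertex set $\mathcal G$ and edges the pairs of adjacent elements. *)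

(* Defs.v *)
(* Division rings: unitRingType in which every nonzero element
   is a unit; left vector spaces: lmodType K (left scalar action *:). *)
From HB Require Import structures.
From mathcomp Require Import all_boot all_order all_algebra.
Set Implicit Arguments. Unset Strict Implicit. Unset Printing Implicit Defensive.
Import GRing.Theory.
Local Open Scope ring_scope.

Definition division_ring (K : unitRingType) : Prop :=
  forall x : K, x != 0 -> x \is a GRing.unit.

Section Subspaces.
Variables (K : unitRingType) (V : lmodType K).

Definition subspace (X : V -> Prop) : Prop :=
  [/\ X 0, (forall u v, X u -> X v -> X (u + v)) & (forall (a : K) v, X v -> X (a *: v))].

Definition sumsp (X Y : V -> Prop) : V -> Prop :=
  fun v => exists x y, [/\ X x, Y y & v = x + y].

Definition span1 (v : V) : V -> Prop := fun w => exists a : K, w = a *: v.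

(* X is isomorphic to V/X: there is a K-linear map V -> V with image X and
   kernel X (so that V/X ≅ im f = X by the first isomorphism theorem). *)
Definition iso_to_quotient (X : V -> Prop) : Prop :=
  exists f : V -> V,
    [/\ (forall u v, f (u + v) = f u + f v),
        (forall (a : K) v, f (a *: v) = a *: f v),
        (forall w, X w <-> exists v, w = f v) &
        (forall v, f v = 0 <-> X v)].

Definition inG (X : V -> Prop) : Prop := subspace X /\ iso_to_quotient X.

Definition Gset := {X : V -> Prop | inG X}.

Definition distant (X Y : V -> Prop) : Prop :=
  (forall v, X v -> Y v -> v = 0) /\ (forall v, sumsp X Y v).

(* dim (Z / X) = 1, for a subspace X ⊆ Z: Z/X is spanned by one nonzero class *)
Definition quot_dim1 (Z X : V -> Prop) : Prop :=
  exists v, [/\ Z v, ~ X v & forall w, Z w <-> sumsp X (span1 v) w].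

Definition adjacent (X Y : V -> Prop) : Prop :=
  quot_dim1 (sumsp X Y) X /\ quot_dim1 (sumsp X Y) Y.

End Subspaces.

(* Main.v *)
Require Import Defs.
From mathcomp Require Import all_boot all_order all_algebra.
From mathcomp Require boolp classical_sets.
From Stdlib Require Import Classical ClassicalEpsilon.
Set Implicit Arguments. Unset Strict Implicit. Unset Printing Implicit Defensive.
Local Open Scope ring_scope.
Import GRing.Theory.

Section LA.
Variables (K : unitRingType) (V : lmodType K).
Hypothesis hK : division_ring K.

Implicit Types (X Y Z W A B U : V -> Prop) (u v w x y z : V). 

Definition incl X Y := forall v, X v -> Y v.

Lemma sp0 X : subspace X -> X 0. Proof. by case. Qed.
Lemma spD X u v : subspace X -> X u -> X v -> X (u + v). Proof. by case=> _ H _; apply: H. Qed.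
Lemma spZ X a v : subspace X -> X v -> X (a *: v). Proof. by case=> _ _ H; apply: H. Qed.
Lemma spN X v : subspace X -> X v -> X (- v).
Proof. by move=> sX Xv; rewrite -scaleN1r; apply: spZ. Qed.
Lemma spB X u v : subspace X -> X u -> X v -> X (u - v).
Proof. by move=> sX Xu Xv; apply: spD => //; apply: spN. Qed.
Lemma spZinv X a v : subspace X -> a != 0 -> X (a *: v) -> X v.
Proof.
move=> sX a0 Xav; have ua := hK a0.
by have := spZ (a^-1) sX Xav; rewrite scalerA mulVr // scale1r.
Qed.

Lemma sumsp_sp X Y : subspace X -> subspace Y -> subspace (sumsp X Y).
Proof.
move=> sX sY; split.
- by exists 0, 0; rewrite addr0; split => //; apply: sp0.
- move=> u v [x1 [y1 [X1 Y1 ->]]] [x2 [y2 [X2 Y2 ->]]].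
  exists (x1 + x2), (y1 + y2); split; [exact: spD|exact: spD|by rewrite addrACA].
- move=> a v [x1 [y1 [X1 Y1 ->]]]; exists (a *: x1), (a *: y1).
  by split; [exact: spZ|exact: spZ|rewrite scalerDr].
Qed.

Lemma span1_sp v : subspace (span1 v).
Proof.
split.
- by exists 0; rewrite scale0r.
- by move=> _ _ [a ->] [b ->]; exists (a + b); rewrite scalerDl.
- by move=> a _ [b ->]; exists (a * b); rewrite scalerA.
Qed.

Lemma sumsp_l X Y v : subspace Y -> X v -> sumsp X Y v.
Proof. by move=> sY Xv; exists v, 0; rewrite addr0; split => //; apply: sp0. Qed.
Lemma sumsp_r X Y v : subspace X -> Y v -> sumsp X Y v.
Proof. by move=> sX Yv; exists 0, v; rewrite add0r; split => //; apply: sp0. Qed.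
Lemma sumspC X Y v : sumsp X Y v -> sumsp Y X v.
Proof. by move=> [x [y [Xx Yy ->]]]; exists y, x; rewrite addrC. Qed.

Lemma distantC X Y : distant X Y -> distant Y X.
Proof.
move=> [H1 H2]; split; first by move=> v Yv Xv; apply: H1.
by move=> v; apply: sumspC.
Qed.

Lemma neq0_not0 X v : subspace X -> ~ X v -> v != 0.
Proof. by move=> sX nX; apply/eqP => v0; apply: nX; rewrite v0; apply: sp0. Qed.


Lemma ZC A B U : subspace A -> subspace B -> subspace U -> incl B U ->
  (forall v, A v -> B v -> v = 0) ->
  exists W, [/\ subspace W, incl B W, incl W U,
     (forall v, A v -> W v -> v = 0) & incl U (sumsp A W)].
Proof.
move=> sA sB sU BU AB.
pose P W := [/\ subspace W, incl B W, incl W U & (forall v, A v -> W v -> v = 0)].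
pose T := {W | P W}.
have t0 : T by exists B; split.
pose R (s t : T) := boolp.asbool (incl (sval s) (sval t)).
have [t tmax] : exists t : T, classical_sets.premaximal (fun x y : T => R x y) t.
  apply: (@classical_sets.ZL_preorder T t0 R).
- by move=> s; apply/boolp.asboolP.
- move=> r s t /boolp.asboolP H1 /boolp.asboolP H2; apply/boolp.asboolP.
  by move=> v /H1 /H2.
- move=> C Ctot.
  pose Wc v := B v \/ exists s, C s /\ sval s v.
  have PWc : P Wc.
    split.
    + split; first by left; apply: sp0.
      * move=> u v [Bu|[s1 [Cs1 s1u]]] [Bv|[s2 [Cs2 s2v]]].
        - by left; apply: spD.
        - right; exists s2; split => //; case: s2 {Cs2} s2v => W [sW BW _ _] /= Wv.
          by apply: spD => //; apply: BW.
        - right; exists s1; split => //; case: s1 {Cs1} s1u => W [sW BW _ _] /= Wv.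
          by apply: spD => //; apply: BW.
        - have [/boolp.asboolP H|/boolp.asboolP H] := Ctot s1 s2 Cs1 Cs2.
          + right; exists s2; split => //; case: s2 {Cs2} s2v H => W [sW BW _ _] /= Wv H.
            by apply: spD => //; apply: H.
          + right; exists s1; split => //; case: s1 {Cs1} s1u H => W [sW BW _ _] /= Wv H.
            by apply: spD => //; apply: H.
      * move=> a v [Bv|[s [Cs sv]]]; first by left; apply: spZ.
        right; exists s; split => //; case: s {Cs} sv => W [sW BW _ _] /= Wv.
        by apply: spZ.
    + by move=> v Bv; left.
    + move=> v [/BU //|[[W [sW BW WU AW]] [_ /= Wv]]]; exact: WU.
    + move=> v Av [Bv|[[W [sW BW WU AW]] [_ /= Wv]]]; first exact: AB.
      exact: AW.
  exists (exist _ Wc PWc) => s Cs; apply/boolp.asboolP => v sv /=.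
  by right; exists s.
case: t tmax => W PW tmax; case: (PW) => sW BW WU AW.
exists W; split => // u Uu.
apply: NNPP => nu.
pose W' := fun v : V => exists (w : V) (c : K), W w /\ v = w + c *: u.
have PW' : P W'.
  split.
  - split.
    + by exists 0, 0; rewrite scale0r addr0; split => //; apply: sp0.
    + move=> _ _ [w1 [c1 [W1 ->]]] [w2 [c2 [W2 ->]]].
      exists (w1 + w2), (c1 + c2); split; first exact: spD.
      by rewrite scalerDl addrACA.
    + move=> a _ [w1 [c1 [W1 ->]]]; exists (a *: w1), (a * c1); split; first exact: spZ.
      by rewrite scalerDr scalerA.
  - by move=> v Bv; exists v, 0; rewrite scale0r addr0; split => //; apply: BW.
  - move=> _ [w [c [Ww ->]]]; apply: spD => //; [exact: WU|exact: spZ].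
  - move=> v Av [w [c [Ww Hv]]].
    have [c0|c0] := eqVneq c 0.
      by move: Hv Av; rewrite c0 scale0r addr0 => -> Aw; exact: AW Aw Ww.
    exfalso; apply: nu.
    have uc := hK c0.
    exists (c^-1 *: (w + c *: u)), (- (c^-1 *: w)); split.
    + by rewrite -Hv; apply: spZ.
    + by apply: spN => //; apply: spZ.
    + by rewrite scalerDr scalerA mulVr // scale1r addrAC addrN add0r.
have H : R (exist _ W PW) (exist _ W' PW').
  by apply/boolp.asboolP => v Wv /=; exists v, 0; rewrite scale0r addr0.
move: (tmax _ H) => /boolp.asboolP /= HW.
have W'u : W' u by exists 0, 1; rewrite scale1r add0r; split => //; apply: sp0.
apply: nu; apply: sumsp_r => //; exact: HW.
Qed.


Lemma dec_uniq A B (a1 b1 a2 b2 : V) : subspace A -> subspace B ->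
  (forall v, A v -> B v -> v = 0) -> A a1 -> B b1 -> A a2 -> B b2 ->
  a1 + b1 = a2 + b2 -> a1 = a2 /\ b1 = b2.
Proof.
move=> sA sB AB A1 B1 A2 B2 e.
have e' : a1 - a2 = b2 - b1.
  by apply/eqP; rewrite subr_eq eq_sym addrAC subr_eq (addrC b2) -e.
have : a1 - a2 = 0 by apply: AB; [exact: spB|rewrite e'; exact: spB].
move=> /eqP; rewrite subr_eq0 => /eqP h; split => //.
by move: e; rewrite h => /addrI.
Qed.

Lemma lin0 (f : V -> V) : (forall (a : K) v, f (a *: v) = a *: f v) -> f 0 = 0.
Proof. by move=> fZ; have := fZ 0 0; rewrite !scale0r. Qed.

Lemma linB (f : V -> V) : (forall u v, f (u + v) = f u + f v) ->
  (forall (a : K) v, f (a *: v) = a *: f v) -> forall u v, f (u - v) = f u - f v.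
Proof. by move=> fD fZ u v; rewrite fD -scaleN1r fZ scaleN1r. Qed.

Lemma Gcompl A B : inG A -> subspace B -> distant A B -> inG B.
Proof.
move=> [sA [f [fD fZ fim fker]]] sB [AB ABs]; split => //.
pose Q v b := B b /\ exists a b', [/\ A a, B b', v = a + b' & f b = a].
have ex v : exists b, Q v b.
  have [a [b' [Aa Bb' ->]]] := ABs v.
  have [u ->] := (fim a).1 Aa.
  have [a'' [b [Aa'' Bb ->]]] := ABs u.
  exists b; split => //; exists (f (a'' + b)), b'; split => //.
    by apply/(fim _).2; exists (a'' + b).
  by rewrite fD (fker a'').2 // add0r.
have uq v b1 b2 : Q v b1 -> Q v b2 -> b1 = b2.
  move=> [B1 [a1 [c1 [A1 C1 e1 f1]]]] [B2 [a2 [c2 [A2 C2 e2 f2]]]].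
  have [ea _] := dec_uniq sA sB AB A1 C1 A2 C2 (etrans (esym e1) e2).
  apply/eqP; rewrite -subr_eq0; apply/eqP; apply: AB; last exact: spB.
  by apply/(fker _).1; rewrite (linB fD fZ) f1 f2 ea subrr.
pose g v := proj1_sig (constructive_indefinite_description _ (ex v)).
have gQ v : Q v (g v) by rewrite /g; case: constructive_indefinite_description.
exists g; split.
- move=> u v; apply: (uq (u + v)) => //.
  have [Bu [a1 [c1 [A1 C1 e1 f1]]]] := gQ u.
  have [Bv [a2 [c2 [A2 C2 e2 f2]]]] := gQ v.
  split; first exact: spD.
  exists (a1 + a2), (c1 + c2); split; [exact: spD|exact: spD| |].
    by rewrite e1 e2 addrACA.
  by rewrite fD f1 f2.
- move=> a v; apply: (uq (a *: v)) => //.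
  have [Bv [a1 [c1 [A1 C1 e1 f1]]]] := gQ v.
  split; first exact: spZ.
  exists (a *: a1), (a *: c1); split; [exact: spZ|exact: spZ| |].
    by rewrite e1 scalerDr.
  by rewrite fZ f1.
- move=> w; split.
    move=> Bw; exists (f w); apply: (uq (f w)) => //.
    split => //; exists (f w), 0; split => //; first by apply/(fim _).2; exists w.
      exact: sp0.
    by rewrite addr0.
  by move=> [v ->]; case: (gQ v).
- move=> v; split.
    move=> gv0; have [_ [a1 [c1 [A1 C1 e1 f1]]]] := gQ v.
    by move: f1; rewrite gv0 (lin0 fZ) => a10; rewrite e1 -a10 add0r.
  move=> Bv; apply: (uq v) => //; split; first exact: sp0.
  exists 0, v; split => //; [exact: sp0|by rewrite add0r|exact: lin0].
Qed.


Definition fullsp : V -> Prop := fun _ => True.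
Lemma fullsp_sp : subspace fullsp. Proof. by []. Qed.

Lemma sumsp_min A B T : subspace T -> incl A T -> incl B T -> incl (sumsp A B) T.
Proof. by move=> sT AT BT _ [a [b [Aa Bb ->]]]; apply: spD => //; [exact: AT|exact: BT]. Qed.

Lemma span1_min T u : subspace T -> T u -> incl (span1 u) T.
Proof. by move=> sT Tu _ [a ->]; apply: spZ. Qed.

Lemma span1_self u : span1 u u. Proof. by exists 1; rewrite scale1r. Qed.

Lemma span1_disj A u : subspace A -> ~ A u -> forall v, A v -> span1 u v -> v = 0.
Proof.
move=> sA nAu v Av [a ev]; have [a0|a0] := eqVneq a 0; first by rewrite ev a0 scale0r.
by exfalso; apply: nAu; apply: (spZinv sA a0); rewrite -ev.
Qed.

Lemma primal Z B : inG Z -> subspace B -> (forall v, Z v -> B v -> v = 0) ->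
  exists W, [/\ inG W, incl B W & distant Z W].
Proof.
move=> [sZ GZ] sB ZB.
have [W [sW BW _ ZW UW]] := ZC sZ sB fullsp_sp (fun _ _ => I) ZB.
have dZW : distant Z W by split => // v; apply: UW.
exists W; split => //; exact: Gcompl (conj sZ GZ) sW dZW.
Qed.

Definition zsp : V -> Prop := fun v => v = 0.
Lemma zsp_sp : subspace zsp.
Proof.
split; rewrite /zsp //; first by move=> u v -> ->; rewrite addr0.
by move=> a v ->; rewrite scaler0.
Qed.

Lemma dual Z Y z : inG Z -> subspace Y -> Z z -> ~ Y z ->
  exists W, [/\ inG W, distant Z W & ~ sumsp Y W z].
Proof.
move=> [sZ GZ] sY Zz nYz.
have [H [sH YH _ zH UH]] := ZC (span1_sp z) sY fullsp_sp (fun _ _ => I)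
   (fun v a b => span1_disj sY nYz b a).
have zH0 : incl zsp H by move=> v ->; apply: sp0.
have [W [sW _ WH ZW HZW]] := ZC sZ zsp_sp sH zH0 (fun v _ (e : zsp v) => e).
have dZW : distant Z W.
  split => // v; have [_ [h [[c ->] Hh ->]]] := UH v I.
  have [z' [w [Zz' Ww ->]]] := HZW h Hh.
  exists (c *: z + z'), w; split => //; first by apply: spD => //; apply: spZ.
  by rewrite addrA.
exists W; split => //; first exact: Gcompl (conj sZ GZ) sW dZW.
move=> [y [w [Yy Ww ez]]].
have Hz : H z by rewrite ez; apply: spD => //; [exact: YH|exact: WH].
have z0 := zH z (span1_self z) Hz.
by apply: nYz; rewrite z0; apply: sp0.
Qed.


Definition ext X Y := incl X Y /\ incl Y X.
Definition Dsub Z X Y := forall W, inG W -> distant Z W -> distant X W \/ distant Y W.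

Lemma twin Z Y : inG Z -> subspace Y ->
  (forall W, inG W -> distant Z W -> distant Y W) -> ext Z Y.
Proof.
move=> GZ sY H; have sZ := GZ.1; split.
- move=> z Zz; apply: NNPP => nYz.
  have [W [GW dZW nz]] := dual GZ sY Zz nYz.
  by apply: nz; case: (H W GW dZW).
- move=> y Yy; apply: NNPP => nZy.
  have [W [GW yW dZW]] := primal GZ (span1_sp y) (span1_disj sZ nZy).
  have [YW _] := H W GW dZW.
  have y0 := YW y Yy (yW y (span1_self y)).
  by apply: nZy; rewrite y0; apply: sp0.
Qed.

Lemma disj_incl A B W b : subspace A -> subspace B -> incl A B -> B b -> ~ A b ->
  distant A W -> distant B W -> False.
Proof.
move=> sA sB AB Bb nAb [_ AW] [BW _].
have [a [w [Aa Ww eb]]] := AW b.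
have ew : w = b - a by rewrite eb addrC addKr.
have w0 : w = 0 by apply: BW => //; rewrite ew; apply: spB => //; apply: AB.
by apply: nAb; rewrite eb w0 addr0.
Qed.

Lemma notincl X Y Z : inG X -> inG Y -> inG Z -> ~ ext Z X -> ~ ext Z Y ->
  Dsub Z X Y -> exists x0, X x0 /\ ~ Z x0.
Proof.
move=> GX GY GZ nZX nZY D; apply: NNPP => nex.
have XZ : incl X Z.
  by move=> x Xx; apply: NNPP => nZx; apply: nex; exists x.
have [z1 [Zz1 nXz1]] : exists z1, Z z1 /\ ~ X z1.
  apply: NNPP => nex2; apply: nZX; split => // z Zz.
  by apply: NNPP => nXz; apply: nex2; exists z.
apply: nZY; apply: (twin GZ GY.1) => W GW dZW.
case: (D W GW dZW) => // dXW.
by exfalso; apply: (disj_incl GX.1 GZ.1 XZ Zz1 nXz1 dXW dZW).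
Qed.


Lemma DsubC Z X Y : Dsub Z X Y -> Dsub Z Y X.
Proof. by move=> D W GW dZW; case: (D W GW dZW); [right|left]. Qed.

Lemma PinZ X Y Z p : inG Z -> Dsub Z X Y -> X p -> Y p -> Z p.
Proof.
move=> GZ D Xp Yp; apply: NNPP => nZp.
have [W [GW pW dZW]] := primal GZ (span1_sp p) (span1_disj GZ.1 nZp).
have Wp := pW p (span1_self p).
have p0 : p = 0 by case: (D W GW dZW) => -[H _]; apply: H.
by apply: nZp; rewrite p0; apply: sp0 GZ.1.
Qed.

Lemma Ffact X Y Z x y : inG Z -> Dsub Z X Y -> X x -> Y y ->
  exists a b : K, (a != 0 \/ b != 0) /\ Z (a *: x + b *: y).
Proof.
move=> GZ D Xx Yy; apply: NNPP => nex.
have H a b : Z (a *: x + b *: y) -> a = 0 /\ b = 0.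
  move=> Zab; apply: NNPP => nab; apply: nex; exists a, b; split => //.
  by case: (eqVneq a 0) => [a0|]; [right; apply/eqP => b0; apply: nab|left].
pose B := fun v => exists a b : K, v = a *: x + b *: y.
have sB : subspace B.
  split.
  - by exists 0, 0; rewrite !scale0r addr0.
  - move=> _ _ [a1 [b1 ->]] [a2 [b2 ->]]; exists (a1 + a2), (b1 + b2).
    by rewrite !scalerDl addrACA.
  - move=> c _ [a1 [b1 ->]]; exists (c * a1), (c * b1).
    by rewrite scalerDr !scalerA.
have ZB v : Z v -> B v -> v = 0.
  move=> Zv [a [b ev]]; rewrite ev in Zv *; have [-> ->] := H a b Zv.
  by rewrite !scale0r addr0.
have [W [GW BW dZW]] := primal GZ sB ZB.
have Wx : W x by apply: BW; exists 1, 0; rewrite scale1r scale0r addr0.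
have Wy : W y by apply: BW; exists 0, 1; rewrite scale1r scale0r add0r.
case: (D W GW dZW) => -[HW _].
- have x0 := HW x Xx Wx.
  have [] := H 1 0; first by rewrite x0 scaler0 scale0r addr0; apply: sp0 GZ.1.
  by move=> /eqP; rewrite oner_eq0.
- have y0 := HW y Yy Wy.
  have [] := H 0 1; first by rewrite y0 scaler0 scale0r addr0; apply: sp0 GZ.1.
  by move=> _ /eqP; rewrite oner_eq0.
Qed.

Lemma dep Z u v (a b : K) : subspace Z -> ~ Z u -> (a != 0 \/ b != 0) ->
  Z (a *: u + b *: v) -> sumsp Z (span1 u) v.
Proof.
move=> sZ nZu ab Zab.
have [b0|b0] := eqVneq b 0.
  exfalso; apply: nZu; move: Zab; rewrite b0 scale0r addr0.
  by case: ab => [a0 Za|]; [exact: spZinv sZ a0 Za|rewrite b0 eqxx].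
have ub := hK b0.
exists (b^-1 *: (a *: u + b *: v)), ((- (b^-1 * a)) *: u); split.
- exact: spZ.
- by exists (- (b^-1 * a)).
- rewrite scalerDr !scalerA mulVr // scale1r scaleNr.
  by rewrite addrAC subrr add0r.
Qed.

Lemma sumsp_span1_trans Z u v w : subspace Z -> sumsp Z (span1 u) v ->
  sumsp Z (span1 v) w -> sumsp Z (span1 u) w.
Proof.
move=> sZ Hv Hw; have sS := sumsp_sp sZ (span1_sp u).
have ZS : incl Z (sumsp Z (span1 u)) by move=> z Zz; apply: sumsp_l => //; apply: span1_sp.
exact: (sumsp_min sS ZS (span1_min sS Hv) Hw).
Qed.

Lemma cover X Y Z x0 y0 : inG X -> inG Y -> inG Z -> Dsub Z X Y ->
  X x0 -> ~ Z x0 -> Y y0 -> ~ Z y0 -> incl (sumsp X Y) (sumsp Z (span1 x0)).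
Proof.
move=> GX GY GZ D Xx0 nZx0 Yy0 nZy0.
have sZ := GZ.1.
have YS : incl Y (sumsp Z (span1 x0)).
  move=> y Yy; have [a [b [ab Zab]]] := Ffact GZ D Xx0 Yy.
  exact: dep sZ nZx0 ab Zab.
have XS : incl X (sumsp Z (span1 y0)).
  move=> x Xx; have [a [b [ab Zab]]] := Ffact GZ D Xx Yy0.
  have ab' : b != 0 \/ a != 0 by case: ab; [right|left].
  by rewrite addrC in Zab; exact: dep sZ nZy0 ab' Zab.
apply: sumsp_min => //; first exact: sumsp_sp sZ (span1_sp x0).
move=> x Xx; apply: sumsp_span1_trans sZ (YS y0 Yy0) (XS x Xx).
Qed.


Lemma half X Y Z x0 : inG X -> inG Y -> inG Z -> Dsub Z X Y ->
  X x0 -> ~ Z x0 -> ~ Y x0 -> incl (sumsp X Y) (sumsp Z (span1 x0)) ->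
  quot_dim1 (sumsp X Y) Y.
Proof.
move=> GX GY GZ D Xx0 nZx0 nYx0 cov.
have sS := sumsp_sp GX.1 GY.1.
exists x0; split => //; first exact: sumsp_l GY.1 Xx0.
move=> w; split; last first.
  apply: sumsp_min => //; first by move=> y Yy; apply: sumsp_r GX.1 Yy.
  by apply: span1_min => //; apply: sumsp_l GY.1 Xx0.
move=> Sw.
have [W [GW x0W dZW]] := primal GZ (span1_sp x0) (span1_disj GZ.1 nZx0).
have Wx0 := x0W x0 (span1_self x0).
case: (D W GW dZW) => -[HW1 HW2].
  exfalso; apply: nZx0; rewrite (HW1 x0 Xx0 Wx0); exact: sp0 GZ.1.
have [y [w' [Yy Ww' ew]]] := HW2 w.
have Sw' : sumsp X Y w'.
  have -> : w' = w - y by rewrite ew addrC addKr.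
  by apply: spB => //; apply: sumsp_r GX.1 Yy.
have [z [t [Zz [c et] ez]]] := cov w' Sw'.
rewrite et in ez.
have Wz : W z.
  have -> : z = w' - c *: x0 by rewrite ez addrK.
  by apply: spB GW.1 Ww' _; apply: spZ GW.1 Wx0.
have z0 := dZW.1 z Zz Wz.
exists y, (c *: x0); split => //; first by exists c.
by rewrite ew ez z0 add0r.
Qed.

Lemma quot_dim1_ext Z1 Z2 X : (forall v, Z1 v <-> Z2 v) -> quot_dim1 Z1 X -> quot_dim1 Z2 X.
Proof.
move=> e [v [Z1v nXv H]]; exists v; split => //; first by apply/e.
by move=> w; rewrite -e.
Qed.

Lemma dir1 X Y Z : inG X -> inG Y -> inG Z -> ~ ext Z X -> ~ ext Z Y ->
  Dsub Z X Y -> adjacent X Y.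
Proof.
move=> GX GY GZ nZX nZY D.
have [x0 [Xx0 nZx0]] := notincl GX GY GZ nZX nZY D.
have [y0 [Yy0 nZy0]] := notincl GY GX GZ nZY nZX (DsubC D).
have nYx0 : ~ Y x0 by move=> Yx0; apply: nZx0; apply: PinZ GZ D Xx0 Yx0.
have nXy0 : ~ X y0 by move=> Xy0; apply: nZy0; apply: PinZ GZ D Xy0 Yy0.
have cx := cover GX GY GZ D Xx0 nZx0 Yy0 nZy0.
have cy := cover GY GX GZ (DsubC D) Yy0 nZy0 Xx0 nZx0.
split; last exact: half GX GY GZ D Xx0 nZx0 nYx0 cx.
have := half GY GX GZ (DsubC D) Yy0 nZy0 nXy0 cy.
by apply: quot_dim1_ext => v; split; apply: sumspC.
Qed.


Lemma eq_subr (u v w : V) : u = v + w -> w = u - v.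
Proof. by move->; rewrite addrC addKr. Qed.
Lemma eq_subl (u v w : V) : u = v + w -> v = u - w.
Proof. by move->; rewrite addrK. Qed.

Lemma getvec X Y : subspace X -> subspace Y -> quot_dim1 (sumsp X Y) X ->
  exists y, [/\ Y y, ~ X y & incl (sumsp X Y) (sumsp X (span1 y))].
Proof.
move=> sX sY [y1 [[xa [yb [Xxa Yyb e1]]] nXy1 H]].
have nXy : ~ X yb by move=> Xyb; apply: nXy1; rewrite e1; apply: spD.
exists yb; split => // w Sw.
have sT := sumsp_sp sX (span1_sp yb).
have XT : incl X (sumsp X (span1 yb)) by move=> v Xv; apply: sumsp_l => //; apply: span1_sp.
have y1T : sumsp X (span1 yb) y1.
  rewrite e1; exists xa, yb; split => //; exact: span1_self.
exact: (sumsp_min sT XT (span1_min sT y1T) ((H w).1 Sw)).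
Qed.

Lemma dir2 X Y : inG X -> inG Y -> adjacent X Y ->
  ~ ext X Y /\ exists Z, [/\ inG Z, ~ ext Z X, ~ ext Z Y & Dsub Z X Y].
Proof.
move=> GX GY [aX aY]; have sX := GX.1; have sY := GY.1.
have sS := sumsp_sp sX sY.
have [y [Yy nXy SXy]] := getvec sX sY aX.
have aY' : quot_dim1 (sumsp Y X) Y by apply: quot_dim1_ext aY => v; split; apply: sumspC.
have [x [Xx nYx SYx]] := getvec sY sX aY'.
have Xdec x' : X x' -> exists p c, [/\ X p, Y p & x' = p + c *: x].
  move=> Xx'; have [p [t [Yp [c ->] e]]] := SYx x' (sumsp_r sY Xx').
  exists p, c; split => //; rewrite (eq_subl e); apply: (spB sX Xx'); exact: (spZ _ sX Xx).
have Ydec y' : Y y' -> exists p c, [/\ X p, Y p & y' = p + c *: y].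
  move=> Yy'; have [p [t [Xp [c ->] e]]] := SXy y' (sumsp_r sX Yy').
  exists p, c; split => //; rewrite (eq_subl e); apply: (spB sY Yy'); exact: (spZ _ sY Yy).
have K1x c : Y (c *: x) -> c = 0.
  move=> Ycx; have [//|c0] := eqVneq c 0; exfalso; apply: nYx; exact: (spZinv sY c0 Ycx).
have K1y c : X (c *: y) -> c = 0.
  move=> Xcy; have [//|c0] := eqVneq c 0; exfalso; apply: nXy; exact: (spZinv sX c0 Xcy).
pose Z := fun v => exists p c, [/\ X p, Y p & v = p + c *: (x + y)].
have sZ : subspace Z.
  split.
  - by exists 0, 0; rewrite scale0r addr0; split => //; apply: sp0.
  - move=> _ _ [p1 [c1 [X1 Y1 ->]]] [p2 [c2 [X2 Y2 ->]]].
    exists (p1 + p2), (c1 + c2); split; [exact: spD|exact: spD|].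
    by rewrite scalerDl addrACA.
  - move=> a _ [p1 [c1 [X1 Y1 ->]]]; exists (a *: p1), (a * c1).
    by split; [exact: spZ|exact: spZ|rewrite scalerDr scalerA].
have Zp p : X p -> Y p -> Z p by move=> Xp Yp; exists p, 0; rewrite scale0r addr0.
have ZS : incl Z (sumsp X Y).
  move=> _ [p [c [Xp Yp ->]]]; exists (p + c *: x), (c *: y).
  split; [apply: spD => //; exact: spZ|exact: spZ|by rewrite scalerDr addrA].
have XZy : incl X (sumsp Z (span1 y)).
  move=> x' /Xdec [p [c [Xp Yp ->]]].
  exists (p + c *: (x + y)), ((- c) *: y); split; first by exists p, c.
    by exists (- c).
  by rewrite scalerDr scaleNr -addrA addrK.
have YZx : incl Y (sumsp Z (span1 x)).
  move=> y' /Ydec [p [c [Xp Yp ->]]].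
  exists (p + c *: (x + y)), ((- c) *: x); split; first by exists p, c.
    by exists (- c).
  by rewrite scalerDr scaleNr -addrA [c *: x + _]addrC addrK.
have XZx : incl X (sumsp Z (span1 x)).
  move=> x' /Xdec [p [c [Xp Yp ->]]].
  by exists p, (c *: x); split; [exact: Zp|exists c|].
have YZy : incl Y (sumsp Z (span1 y)).
  move=> y' /Ydec [p [c [Xp Yp ->]]].
  by exists p, (c *: y); split; [exact: Zp|exists c|].
have SZx : incl (sumsp X Y) (sumsp Z (span1 x)) by apply: sumsp_min => //; apply: sumsp_sp sZ (span1_sp x).
have nZx : ~ Z x.
  move=> [p [c [Xp Yp e]]].
  rewrite scalerDr in e.
  have e2 := eq_subr e.
  have e3 : c *: y = x - p - c *: x by apply: eq_subr; rewrite -e2.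
  have c0 : c = 0 by apply: K1y; rewrite e3; apply: spB => //; [exact: spB|exact: spZ].
  by apply: nYx; rewrite e c0 !scale0r !addr0.
have nXxy : ~ X (x + y).
  by move=> Xxy; apply: nXy; rewrite (eq_subr (erefl (x + y))); apply: spB.
have nYxy : ~ Y (x + y).
  by move=> Yxy; apply: nYx; rewrite (eq_subl (erefl (x + y))); apply: spB.
have Zxy : Z (x + y) by exists 0, 1; rewrite scale1r add0r; split => //; apply: sp0.
split.
  by move=> [XY _]; apply: nYx; apply: XY.
exists Z; split.
- have [W [GW yW dXW]] := primal GX (span1_sp y) (span1_disj sX nXy).
  have Wy := yW y (span1_self y).
  apply: (Gcompl GW sZ); split.
  + move=> w Ww Zw.
    have [x' [t [Xx' [c et] ew]]] := SXy w (ZS w Zw).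
    rewrite et in ew.
    have x'0 : x' = 0.
      apply: dXW.1 => //; rewrite (eq_subl ew); apply: (spB GW.1 Ww); exact: (spZ _ GW.1 Wy).
    rewrite x'0 add0r in ew.
    move: Zw => [p [d [Xp Yp e]]].
    rewrite ew scalerDr in e.
    have e1 := eq_subr e.
    have e2 : d *: x = c *: y - p - d *: y by apply: eq_subl; rewrite -e1.
    have d0 : d = 0 by apply: K1x; rewrite e2; apply: spB => //; [apply: spB => //; exact: spZ|exact: spZ].
    rewrite d0 !scale0r !addr0 in e.
    have c0 : c = 0 by apply: K1y; rewrite e.
    by rewrite ew c0 scale0r.
  + move=> v; have [x' [w [Xx' Ww ->]]] := dXW.2 v.
    have [z [t [Zz [c ->] ->]]] := XZy x' Xx'.
    exists (c *: y + w), z; split; [|exact: Zz|].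
      by apply: (spD GW.1 _ Ww); exact: (spZ _ GW.1 Wy).
    by rewrite -addrA addrC.
- by move=> [ZX _]; apply: nXxy; apply: ZX.
- by move=> [ZY _]; apply: nYxy; apply: ZY.
- move=> W GW [ZW ZWs].
  have [z1 [w1 [Zz1 Ww1 ex]]] := ZWs x.
  have Sw1 : sumsp X Y w1.
    rewrite (eq_subr ex); apply: spB => //; [exact: sumsp_l sY Xx|exact: ZS].
  have w1n0 : w1 <> 0 by move=> w10; apply: nZx; rewrite ex w10 addr0.
  have WS w : W w -> sumsp X Y w -> exists c, w = c *: w1.
    move=> Ww Sw; have [z [t [Zz [c et] ew]]] := SZx w Sw.
    rewrite et in ew; exists c.
    have Zc : Z (z + c *: z1) by apply: (spD sZ Zz); exact: (spZ _ sZ Zz1).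
    have ec : z + c *: z1 = w - c *: w1.
      by rewrite ew ex scalerDr addrA addrK.
    have e0 : z + c *: z1 = 0.
      apply: (ZW _ Zc); rewrite ec; apply: (spB GW.1 Ww); exact: (spZ _ GW.1 Ww1).
    by apply/eqP; rewrite -subr_eq0 -ec e0.
  have [Xw1|nXw1] := classic (X w1).
  + right; split.
      move=> w Yw Ww; have [c ec] := WS w Ww (sumsp_r sX Yw).
      have [c0|c0] := eqVneq c 0; first by rewrite ec c0 scale0r.
      exfalso; apply: w1n0; apply: (ZW _ _ Ww1); apply: Zp => //.
      by apply: (spZinv sY c0); rewrite -ec.
    have [p [a [Xp Yp ez1]]] := Zz1.
    have Xay : X (a *: y).
      have e' : x = p + (a *: x + a *: y) + w1 by rewrite -scalerDr -ez1.
      have e2 := eq_subl e'.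
      have e3 := eq_subr (esym e2).
      have e4 := eq_subr (esym e3).
      rewrite e4; apply: (spB sX _ (spZ _ sX Xx)); apply: (spB sX _ Xp).
      exact: (spB sX Xx Xw1).
    have a0 := K1y _ Xay.
    rewrite a0 scale0r addr0 in ez1.
    have sYW := sumsp_sp sY GW.1.
    have xYW : sumsp Y W x by exists z1, w1; split => //; rewrite ez1.
    have YWT : incl Y (sumsp Y W) by move=> v Yv; apply: sumsp_l GW.1 Yv.
    move=> v; have [z [w [Zz Ww ->]]] := ZWs v.
    apply: (spD sYW _ (sumsp_r sY Ww)).
    apply: (sumsp_min sYW YWT (span1_min sYW xYW)).
    apply: SYx; apply: sumspC; exact: ZS.
  + left; split.
      move=> w Xw Ww; have [c ec] := WS w Ww (sumsp_l sY Xw).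
      have [c0|c0] := eqVneq c 0; first by rewrite ec c0 scale0r.
      by exfalso; apply: nXw1; apply: (spZinv sX c0); rewrite -ec.
    have sXW := sumsp_sp sX GW.1.
    have [x'' [t [Xx'' [d et] ew1]]] := SXy w1 Sw1.
    rewrite et in ew1.
    have d0 : d != 0.
      by apply/eqP => d0; apply: nXw1; rewrite ew1 d0 scale0r addr0.
    have yXW : sumsp X W y.
      exists (- (d^-1 *: x'')), (d^-1 *: w1); split.
      * by apply: (spN sX); apply: (spZ _ sX Xx'').
      * exact: (spZ _ GW.1 Ww1).
      * by rewrite ew1 scalerDr scalerA mulVr ?hK // scale1r addKr.
    have XWT : incl X (sumsp X W) by move=> v Xv; apply: sumsp_l GW.1 Xv.
    move=> v; have [z [w [Zz Ww ->]]] := ZWs v.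
    apply: (spD sXW _ (sumsp_r sX Ww)).
    apply: (sumsp_min sXW XWT (span1_min sXW yXW)).
    by apply: SXy; apply: ZS.
Qed.

End LA.
Section Final.
Variables (K : unitRingType) (V : lmodType K).
Hypothesis hK : division_ring K.

Definition gdist (A B : Gset V) := distant (proj1_sig A) (proj1_sig B).
Definition same (A B : Gset V) := forall W : Gset V, gdist A W <-> gdist B W.
Definition Char (X Y : Gset V) :=
  ~ same X Y /\ exists Z : Gset V, [/\ ~ same Z X, ~ same Z Y &
    forall W : Gset V, gdist Z W -> gdist X W \/ gdist Y W].

Lemma distant_ext (A B W : V -> Prop) : ext A B -> distant A W -> distant B W.
Proof.
move=> [AB BA] [H1 H2]; split; first by move=> v /BA; apply: H1.
move=> v; have [a [w [Aa Ww ->]]] := H2 v; exists a, w; split => //; exact: AB.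
Qed.

Lemma same_ext (A B : Gset V) : same A B <-> ext (proj1_sig A) (proj1_sig B).
Proof.
split.
- move=> H; case: A H => A GA; case: B => B GB /= H.
  apply: (twin hK GA GB.1) => W GW dAW.
  exact: ((H (exist _ W GW)).1 dAW).
- move=> e W; split; first exact: distant_ext.
  by apply: distant_ext; case: e.
Qed.

Lemma adj_Char (X Y : Gset V) : adjacent (proj1_sig X) (proj1_sig Y) <-> Char X Y.
Proof.
case: X => X GX; case: Y => Y GY /=; split.
- move=> adj; have [nXY [Z [GZ nZX nZY D]]] := dir2 hK GX GY adj.
  split; first by move/same_ext.
  exists (exist _ Z GZ); split; try by move/same_ext.
  by move=> [W GW] dZW; apply: D.
- move=> [_ [[Z GZ] [nZX nZY D]]].
  apply: (dir1 hK GX GY GZ); try by move=> e; apply/nZX/same_ext.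
    by move=> e; apply/nZY/same_ext.
  by move=> W GW dZW; apply: (D (exist _ W GW)).
Qed.

End Final.

Lemma Char_phi (K K' : unitRingType) (V : lmodType K) (V' : lmodType K')
  (phi : Gset V -> Gset V') (phi_bij : bijective phi)
  (phi_dist : forall X Y : Gset V, gdist X Y <-> gdist (phi X) (phi Y)) :
  forall X Y : Gset V, Char X Y <-> Char (phi X) (phi Y).
Proof.
case: phi_bij => psi phiK psiK.
have sameP A B : same A B <-> same (phi A) (phi B).
  split.
  - move=> H W'; rewrite -(psiK W') -!phi_dist; exact: H.
  - by move=> H W; rewrite !phi_dist; apply: H.
move=> X Y; split.
- move=> [nXY [Z [nZX nZY D]]]; split; first by rewrite -sameP.
  exists (phi Z); split; try by rewrite -sameP.
  move=> W'; rewrite -(psiK W') -!phi_dist; exact: D.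
- move=> [nXY [Z' [nZX nZY D]]]; split; first by rewrite sameP.
  exists (psi Z'); split; try by rewrite sameP psiK.
  by move=> W; rewrite !phi_dist psiK; apply: D.
Qed.

Theorem theorem4p1 (K K' : unitRingType) (V : lmodType K) (V' : lmodType K')
  (hK : division_ring K) (hK' : division_ring K')
  (hG : inhabited (Gset V)) (hG' : inhabited (Gset V'))
  (phi : Gset V -> Gset V') (phi_bij : bijective phi)
  (phi_dist : forall X Y : Gset V,
      distant (proj1_sig X) (proj1_sig Y) <->
      distant (proj1_sig (phi X)) (proj1_sig (phi Y))) :
  forall X Y : Gset V,
    adjacent (proj1_sig X) (proj1_sig Y) <->
    adjacent (proj1_sig (phi X)) (proj1_sig (phi Y)).
Proof.
move=> X Y.
rewrite (adj_Char hK) (adj_Char hK').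
exact: (Char_phi phi_bij phi_dist).
Qed.
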